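(* Let $h,m$ be positive integers. Every $\mathrm{CC}^h[m]$-circuit $\Gamma$ computing a non-constant Boolean function has balance at least $2^{1-\gamma_{h,m}^{-1}(|\Gamma|)}$.
   Context: For an integer $m\ge 1$ and $A\subseteq\{0,\dots,m-1\}$, a gate $\mathrm{MOD}_m^A$ takes finitely many Boolean inputs (counted with multiplicity) and outputs $1$ if their sum modulo $m$ lies in $A$, and $0$ otherwise. A $\mathrm{CC}^h[m]$-circuit is a depth-$h$ Boolean circuit all of whose gates are of the form $\mathrm{MOD}_m^A$ ($A$ may vary between gates), with Boolean variable inputs (constants allowed) and multiple wires allowed. $|\Gamma|$ is the number of gates of $\Gamma$. $\gamma_{h,m}(n)$ is the size of the smallest $\mathrm{CC}^h[m]$-circuit computing the $n$-ary conjunction $\mathrm{AND}_n$ (partial function), and $\gamma_{h,m}^{-1}(k)$ is the largest $n$ with $\gamma_{h,m}(n)\le k$. The balance of an $n$-ary Boolean function $f$ is $1-\frac{\big||f^{-1}(0)|-|f^{-1}(1)|\big|}{2^n}$. *)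

(* Defs.v *)
From mathcomp Require Import all_boot all_algebra.
Set Implicit Arguments. Unset Strict Implicit. Unset Printing Implicit Defensive.
Import GRing.Theory Num.Theory.

(* A wire feeding a gate: a Boolean variable x_i, a constant, or the output
   of an earlier gate (gates are indexed by their position in the list). *)
Inductive wire := WVar of nat | WConst of bool | WGate of nat.

(* A MOD_m^A gate with A a subset of {0,...,m-1}; inputs form a list, so
   multiple wires from the same source are allowed. *)
Record gate (m : nat) := Gate { gate_acc : {set 'I_m}; gate_in : seq wire }.

(* A circuit of MOD_m gates on [arity] variables; the gates are listed in
   topological order and the output gate is the last one. *)
Record circuit (m : nat) := Circuit { arity : nat; gates : seq (gate m) }.

Definition csize m (C : circuit m) : nat := size (gates C).

Definition wire_ok (n j : nat) (w : wire) : bool :=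
  match w with WVar i => i < n | WConst _ => true | WGate k => k < j end.

Fixpoint gates_ok m (n j : nat) (gs : seq (gate m)) : bool :=
  match gs with
  | [::] => true
  | g :: gs' => all (wire_ok n j) (gate_in g) && gates_ok n j.+1 gs'
  end.

Definition circ_wf m (C : circuit m) : bool :=
  (0 < size (gates C)) && gates_ok (arity C) 0 (gates C).

Definition gate_out m (g : gate m) (ins : seq bool) : bool :=
  [exists a in gate_acc g, nat_of_ord a == sumn (map nat_of_bool ins) %% m].

Definition wire_val (x : nat -> bool) (vals : seq bool) (w : wire) : bool :=
  match w with WVar i => x i | WConst b => b | WGate k => nth false vals k end.

Fixpoint eval_gates m (x : nat -> bool) (vals : seq bool) (gs : seq (gate m))
  : seq bool :=
  match gs with
  | [::] => vals
  | g :: gs' =>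
      eval_gates x (rcons vals (gate_out g (map (wire_val x vals) (gate_in g)))) gs'
  end.

Definition circ_fun m (C : circuit m) (t : (arity C).-tuple bool) : bool :=
  last false (eval_gates (fun i => nth false t i) [::] (gates C)).
Arguments circ_fun {m} C t.

Definition wire_depth (ds : seq nat) (w : wire) : nat :=
  match w with WGate k => nth 0 ds k | _ => 0 end.

Fixpoint gate_depths m (ds : seq nat) (gs : seq (gate m)) : seq nat :=
  match gs with
  | [::] => ds
  | g :: gs' =>
      gate_depths (rcons ds (\max_(w <- gate_in g) wire_depth ds w).+1) gs'
  end.

Definition circ_depth m (C : circuit m) : nat :=
  \max_(d <- gate_depths [::] (gates C)) d.

Definition is_CC (h m : nat) (C : circuit m) : Prop :=
  circ_wf C /\ circ_depth C = h.
Arguments is_CC h m C : clear implicits.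

Definition computes_AND m (n : nat) (C : circuit m) : Prop :=
  arity C = n /\ forall t : (arity C).-tuple bool, circ_fun C t = all id t.
Arguments computes_AND {m} n C.

(* gamma_{h,m}(n) = s : s is the size of a smallest CC^h[m]-circuit
   computing AND_n (undefined if there is none: gamma is partial) *)
Definition gamma_is (h m n s : nat) : Prop :=
  (exists C : circuit m, is_CC h m C /\ computes_AND n C /\ csize C = s) /\
  (forall C : circuit m, is_CC h m C -> computes_AND n C -> s <= csize C).

Definition gamma_inv_is (h m k N : nat) : Prop :=
  (exists s, gamma_is h m N s /\ s <= k) /\
  (forall n s, gamma_is h m n s -> s <= k -> n <= N).

Definition balance (n : nat) (f : n.-tuple bool -> bool) : rat :=
  1 - `| (#|[pred t : n.-tuple bool | ~~ f t]|%:R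
          - #|[pred t : n.-tuple bool | f t]|%:R : rat) | / (2 ^+ n).

Definition nonconstant (n : nat) (f : n.-tuple bool -> bool) : Prop :=
  exists t1 t2, f t1 <> f t2.

(* Main.v *)
Require Import Defs.
From mathcomp Require Import all_boot all_algebra.
From mathcomp Require Import ring lra.
From Stdlib Require Import Classical.
Import GRing.Theory Num.Theory.
Set Implicit Arguments. Unset Strict Implicit. Unset Printing Implicit Defensive.

Lemma card_cons n b (Q : pred (n.-tuple bool)) :
  #|[pred t : n.+1.-tuple bool | (thead t == b) && Q [tuple of behead t]]| = #|Q|.
Proof.
have inj : injective (fun t : n.-tuple bool => [tuple of b :: t]).
  by move=> x y /(congr1 val) [] /val_inj.
rewrite -(card_image inj Q); apply: eq_card => t; rewrite inE.
apply/andP/imageP => [[/eqP hb hq]|[x xQ ->]].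
  by exists [tuple of behead t] => //; rewrite [LHS]tuple_eta hb; apply: val_inj.
split => //.
by have -> : [tuple of behead [tuple of b :: x]] = x by apply: val_inj.
Qed.

Lemma card_split n (P : pred (n.+1.-tuple bool)) :
  #|[pred t | P t]| = #|[pred t : n.-tuple bool | P [tuple of false :: t]]|
                    + #|[pred t : n.-tuple bool | P [tuple of true :: t]]|.
Proof.
rewrite -(cardID [pred t : n.+1.-tuple bool | thead t]) addnC.
rewrite -(card_cons false [pred t : n.-tuple bool | P [tuple of false :: t]]).
rewrite -(card_cons true [pred t : n.-tuple bool | P [tuple of true :: t]]).
congr (_ + _); apply: eq_card => t; rewrite !inE;
  case/tupleP: t => x t; rewrite theadE;
  (have -> : [tuple of behead [tuple of x :: t]] = t by apply: val_inj);
  by case: x; rewrite ?andbT ?andbF.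
Qed.

Inductive lit := LConst of bool | LVar of nat & bool.
Definition eval_lit (t : seq bool) (l : lit) : bool :=
  match l with LConst b => b | LVar j b => addb (nth false t j) b end.
Definition lit_ok (d : nat) (l : lit) : bool :=
  match l with LConst _ => true | LVar j _ => j < d end.
Definition shift_lit (l : lit) : lit :=
  match l with LConst b => LConst b | LVar j b => LVar j.+1 b end.

Lemma comb n (f : n.-tuple bool -> bool) : 0 < #|[pred t | f t]| ->
  exists d (s : n.-tuple lit), all (lit_ok d) s /\
    2 ^ n <= #|[pred t | f t]| * 2 ^ d /\
    forall t : d.-tuple bool, f [tuple of map (eval_lit t) s] = all id t.
Proof.
elim: n f => [|n IH] f.
  move=> /card_gt0P [t0]; rewrite inE => ft0.
  exists 0, [tuple]; split => //; split.
    by rewrite expn0 muln1; apply/card_gt0P; exists t0.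
  by move=> t; rewrite tuple0 [t]tuple0 /=; rewrite (tuple0 t0) in ft0.
rewrite card_split.
set f0 := fun t : n.-tuple bool => f [tuple of false :: t].
set f1 := fun t : n.-tuple bool => f [tuple of true :: t].
change (0 < #|[pred t | f0 t]| + #|[pred t | f1 t]| ->
  exists d (s : n.+1.-tuple lit), all (lit_ok d) s /\
    2 ^ n.+1 <= (#|[pred t | f0 t]| + #|[pred t | f1 t]|) * 2 ^ d /\
    forall t : d.-tuple bool, f [tuple of map (eval_lit t) s] = all id t).
have Hsh : forall (y : bool) (t : seq bool) (s : seq lit),
    map (eval_lit (y :: t)) (map shift_lit s) = map (eval_lit t) s.
  by move=> y t s; rewrite -map_comp; apply: eq_map => -[b|j b].
have Hok : forall d (s : seq lit), all (lit_ok d) s -> all (lit_ok d.+1) (map shift_lit s).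
  by move=> d s ok; rewrite all_map; apply: sub_all ok => -[b|j b] //=.
case: (posnP #|[pred t | f0 t]|) => [M00|M0pos];
  case: (posnP #|[pred t | f1 t]|) => [M10|M1pos] //.
- by rewrite M00 M10.
- move=> _; have [d [s [ok [hc hf]]]] := IH f1 M1pos.
  exists d.+1, [tuple of LVar 0 false :: map shift_lit s]; split.
    by rewrite /= Hok.
  split; first by rewrite M00 add0n expnS (expnS 2 d) mulnCA leq_pmul2l.
  case/tupleP => y t.
  have -> : [tuple of map (eval_lit [tuple of y :: t]) [tuple of LVar 0 false :: map shift_lit s]]
    = [tuple of y :: [tuple of map (eval_lit t) s]].
    by apply: val_inj; rewrite /= Hsh addbF.
  case: y; first exact: hf.
  by have := card0_eq M00 [tuple of map (eval_lit t) s]; rewrite !inE.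
- move=> _; have [d [s [ok [hc hf]]]] := IH f0 M0pos.
  exists d.+1, [tuple of LVar 0 true :: map shift_lit s]; split.
    by rewrite /= Hok.
  split; first by rewrite M10 addn0 expnS (expnS 2 d) mulnCA leq_pmul2l.
  case/tupleP => y t.
  have -> : [tuple of map (eval_lit [tuple of y :: t]) [tuple of LVar 0 true :: map shift_lit s]]
    = [tuple of ~~ y :: [tuple of map (eval_lit t) s]].
    by apply: val_inj; rewrite /= Hsh addbT.
  case: y; first exact: hf.
  by have := card0_eq M10 [tuple of map (eval_lit t) s]; rewrite !inE.
- move=> _; case: (leqP #|[pred t | f0 t]| #|[pred t | f1 t]|) => hle.
    have [d [s [ok [hc hf]]]] := IH f0 M0pos.
    exists d, [tuple of LConst false :: s]; split => //; split.
      rewrite expnS; apply: leq_trans (leq_mul (leqnn 2) hc) _.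
      by rewrite mulnA leq_mul2r mul2n -addnn leq_add2l hle orbT.
    move=> t; rewrite -hf; congr f; exact: val_inj.
  have [d [s [ok [hc hf]]]] := IH f1 M1pos.
  exists d, [tuple of LConst true :: s]; split => //; split.
    rewrite expnS; apply: leq_trans (leq_mul (leqnn 2) hc) _.
    by rewrite mulnA leq_mul2r mul2n -addnn leq_add2r ltnW ?orbT.
  move=> t; rewrite -hf; congr f; exact: val_inj.
Qed.

Section Circ.
Variable m : nat.
Hypothesis mpos : 0 < m.

Definition sub_wire (s : seq lit) (w : wire) : seq wire :=
  match w with
  | WVar i => match nth (LConst false) s i with
              | LConst b => [:: WConst b]
              | LVar j false => [:: WVar j]
              | LVar j true => WConst true :: nseq m.-1 (WVar j)
              end
  | _ => [:: w]
  end.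

Definition sub_gate (s : seq lit) (g : gate m) : gate m :=
  Gate (gate_acc g) (flatten (map (sub_wire s) (gate_in g))).

Definition subC (C : circuit m) (d : nat) (s : seq lit) : circuit m :=
  Circuit d (map (sub_gate s) (gates C)).

Lemma sum_sub_wire (s : seq lit) (t : seq bool) x vals w :
  (forall i, x i = eval_lit t (nth (LConst false) s i)) ->
  sumn (map nat_of_bool (map (wire_val (fun i => nth false t i) vals) (sub_wire s w)))
  = wire_val x vals w %[mod m].
Proof.
move=> hx; case: w => [i|b|k] /=; rewrite ?addn0 //.
rewrite hx; case: (nth (LConst false) s i) => [b|j [|]] /=; rewrite ?addn0 ?addbF //.
have H : forall y : bool, 1 + y * m.-1 = addb y true %[mod m].
  by case => /=; rewrite ?mul1n ?mul0n // add1n prednK // modnn mod0n.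
by rewrite !map_nseq sumn_nseq; apply: H.
Qed.

Lemma sum_sub_wires (s : seq lit) (t : seq bool) x vals ins :
  (forall i, x i = eval_lit t (nth (LConst false) s i)) ->
  sumn (map nat_of_bool (map (wire_val (fun i => nth false t i) vals)
     (flatten (map (sub_wire s) ins))))
  = sumn (map nat_of_bool (map (wire_val x vals) ins)) %[mod m].
Proof.
move=> hx; elim: ins => [|w ins IH] //=.
rewrite !map_cat sumn_cat -modnDm (sum_sub_wire _ _ hx) IH modnDm.
by [].
Qed.

Lemma gate_out_eq (g : gate m) l1 l2 :
  sumn (map nat_of_bool l1) = sumn (map nat_of_bool l2) %[mod m] ->
  gate_out g l1 = gate_out g l2.
Proof. by rewrite /gate_out => ->. Qed.

Lemma eval_sub (s : seq lit) (t : seq bool) x gs vals :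
  (forall i, x i = eval_lit t (nth (LConst false) s i)) ->
  eval_gates (fun i => nth false t i) vals (map (sub_gate s) gs) = eval_gates x vals gs.
Proof.
move=> hx; elim: gs vals => [|g gs IH] vals //=.
rewrite IH; congr (eval_gates _ (rcons _ _) _); apply: gate_out_eq.
exact: sum_sub_wires.
Qed.


Lemma circ_fun_sub (C : circuit m) d (s : (arity C).-tuple lit) (t : d.-tuple bool) :
  circ_fun (subC C d s) t = circ_fun C [tuple of map (eval_lit t) s].
Proof.
rewrite /circ_fun /=; congr (last false _); apply: eval_sub => i /=.
case: (ltnP i (size s)) => hi; first by rewrite (nth_map (LConst false)).
by rewrite !nth_default // size_map.
Qed.

Lemma max_sub ds s ins :
  \max_(w <- flatten (map (sub_wire s) ins)) wire_depth ds w
  = \max_(w <- ins) wire_depth ds w.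
Proof.
elim: ins => [|w ins IH] /=; first by rewrite !big_nil.
rewrite big_cat big_cons IH; congr maxn.
case: w => [i|b|k] /=; rewrite ?big_cons ?big_nil ?maxn0 //.
case: nth => [b|j [|]]; rewrite /= ?big_cons ?big_nil ?maxn0 //.
by rewrite big_nseq /=; elim: m.-1 => //= k ->.
Qed.

Lemma depths_sub ds s gs :
  gate_depths ds (map (sub_gate s) gs) = gate_depths ds gs.
Proof. by elim: gs ds => //= g gs IH ds; rewrite max_sub IH. Qed.

Lemma ok_sub n d (s : seq lit) j gs : size s = n -> all (lit_ok d) s ->
  gates_ok n j gs -> gates_ok d j (map (sub_gate s) gs).
Proof.
move=> hs hok; elim: gs j => //= g gs IH j /andP [a b]; rewrite IH // andbT.
elim: (gate_in g) a => //= w ins IHi /andP [wa wb]; rewrite all_cat IHi // andbT.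
case: w wa => [i|b'|k] //= hi; rewrite ?andbT //.
have := all_nthP (LConst false) hok i; rewrite hs => /(_ hi).
case: nth => [b'|j' [|]] //= hj'; rewrite ?hj' //.
by rewrite all_nseq /= hj' orbT.
Qed.

Definition negg (g : gate m) : gate m := Gate (~: gate_acc g) (gate_in g).
Fixpoint neg_last (gs : seq (gate m)) : seq (gate m) :=
  match gs with
  | [::] => [::]
  | g :: gs' => if gs' is [::] then [:: negg g] else g :: neg_last gs'
  end.
Definition negC (C : circuit m) : circuit m := Circuit (arity C) (neg_last (gates C)).

Lemma gate_out_neg g l : gate_out (negg g) l = ~~ gate_out g l.
Proof.
rewrite /gate_out /=.
set v := sumn _ %% m.
have a0 : v < m by rewrite ltn_pmod.
have H : forall B : {set 'I_m}, [exists a in B, nat_of_ord a == v] = (Ordinal a0 \in B).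
  move=> B; apply/existsP/idP => [[a /andP [aB /eqP av]]|a0B].
    by have -> : Ordinal a0 = a by apply: val_inj.
  by exists (Ordinal a0); rewrite a0B eqxx.
by rewrite !H in_setC.
Qed.

Lemma eval_neg x (gs : seq (gate m)) vals : 0 < size gs ->
  last false (eval_gates x vals (neg_last gs)) = ~~ last false (eval_gates x vals gs).
Proof.
elim: gs vals => //= g gs IH vals _.
case: gs IH => [|g2 gs] IH.
  by rewrite /= !last_rcons gate_out_neg.
by rewrite -IH.
Qed.

Lemma depths_neg ds gs : gate_depths ds (neg_last gs) = gate_depths ds gs.
Proof.
elim: gs ds => //= g gs IH ds; by case: gs IH => //= g2 gs IH; rewrite -?IH.
Qed.

Lemma ok_neg n j gs : gates_ok n j (neg_last gs) = gates_ok n j gs.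
Proof.
elim: gs j => //= g gs IH j; by case: gs IH => //= g2 gs IH; rewrite -?IH.
Qed.

Lemma size_neg gs : size (neg_last gs) = size gs.
Proof. by elim: gs => //= g gs IH; case: gs IH => //= g2 gs ->. Qed.

End Circ.

Lemma ex_min (P : nat -> Prop) : (exists s, P s) ->
  exists s, P s /\ forall s', P s' -> s <= s'.
Proof.
move=> [s Ps]; elim/ltn_ind: s Ps => s IH Ps.
case: (classic (exists s', s' < s /\ P s')) => [[s' [lt Ps']]|nE].
  exact: IH s' lt Ps'.
exists s; split => // s' Ps'; rewrite leqNgt; apply/negP => lt.
by apply: nE; exists s'.
Qed.

Lemma key h m (mpos : 0 < m) (C : circuit m) N : is_CC h m C ->
  gamma_inv_is h m (csize C) N -> 0 < #|[pred t | circ_fun C t]| ->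
  2 ^ arity C <= #|[pred t | circ_fun C t]| * 2 ^ N.
Proof.
move=> [wf dep] [_ Hinv] pos.
have [d [s [ok [hc hf]]]] := comb pos.
pose C' := subC C d s.
have CC' : is_CC h m C'.
  split; last by rewrite /circ_depth /= depths_sub.
  rewrite /circ_wf /= size_map; move/andP: wf => [sz gok]; rewrite sz /=.
  exact: ok_sub (size_tuple s) ok gok.
have AND' : computes_AND d C'.
  by split => // t; rewrite (circ_fun_sub mpos); exact: hf.
have szC' : csize C' = csize C by rewrite /csize /= size_map.
have [s0 [[C0 [h1 [h2 h3]]] hmin]] := ex_min
  (ex_intro (fun s0 => exists C, is_CC h m C /\ computes_AND d C /\ csize C = s0)
     (csize C') (ex_intro _ C' (conj CC' (conj AND' erefl)))).
have hg : gamma_is h m d s0.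
  split; first by exists C0.
  by move=> C1 hC hA; apply: hmin; exists C1.
have le0 : s0 <= csize C by rewrite -szC'; apply: hmin; exists C'.
have dN := Hinv d s0 hg le0.
apply: leq_trans hc _; rewrite leq_mul2l; apply/orP; right; exact: leq_pexp2l.
Qed.

Lemma negC_CC h m (mpos : 0 < m) (C : circuit m) : is_CC h m C -> is_CC h m (negC C).
Proof.
move=> [wf dep]; split; last by rewrite /circ_depth /= depths_neg.
by rewrite /circ_wf /= size_neg ok_neg.
Qed.

Local Open Scope ring_scope.

Lemma bal_arith1 (a b n N : nat) : (a + b = 2 ^ n)%N -> (2 ^ n <= a * 2 ^ N)%N -> (a <= b)%N ->
  (2 : rat) / 2 ^+ N <= 1 - `|(a%:R - b%:R : rat)| / 2 ^+ n.
Proof.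
move=> hs ha hab.
rewrite ler0_norm ?subr_le0 ?ler_nat // opprB.
have Pn : (2 : rat) ^+ n = a%:R + b%:R by rewrite -natrD hs natrX.
have Ppos : (0 : rat) < 2 ^+ n by rewrite exprn_gt0.
have Qpos : (0 : rat) < 2 ^+ N by rewrite exprn_gt0.
have E : 1 - (b%:R - a%:R) / 2 ^+ n = (2 * a%:R) / (2 ^+ n : rat).
  rewrite Pn; field; by rewrite Pn in Ppos; rewrite lt0r_neq0.
rewrite E ler_pdivrMr // mulrAC ler_pdivlMr // -mulrA ler_pM2l //.
by rewrite -(natrX _ 2 n) -(natrX _ 2 N) -natrM ler_nat.
Qed.

Lemma bal_arith (a b n N : nat) : (a + b = 2 ^ n)%N -> (2 ^ n <= a * 2 ^ N)%N ->
  (2 ^ n <= b * 2 ^ N)%N ->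
  (2 : rat) / 2 ^+ N <= 1 - `|(a%:R - b%:R : rat)| / 2 ^+ n.
Proof.
move=> hs ha hb; case: (leqP a b) => hab; first exact: bal_arith1.
rewrite distrC; apply: bal_arith1 => //; [by rewrite addnC | exact: ltnW].
Qed.

Theorem corollary6p2 (h m : nat) (hpos : (0 < h)%N) (mpos : (0 < m)%N)
  (G : circuit m) (N : nat) :
  is_CC h m G ->
  nonconstant (circ_fun G) ->
  gamma_inv_is h m (csize G) N ->
  (2 : rat) / (2 ^+ N) <= balance (circ_fun G).
Proof.
move=> CC [t1 [t2 ne]] ginv.
have [w1 [w0 [fw1 fw0]]] : exists w1 w0, circ_fun G w1 /\ ~~ circ_fun G w0.
  case E1: (circ_fun G t1); case E2: (circ_fun G t2); rewrite E1 E2 in ne => //.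
    by exists t1, t2; rewrite E2.
  by exists t2, t1; rewrite E1.
have pos1 : (0 < #|[pred t | circ_fun G t]|)%N by apply/card_gt0P; exists w1.
have hneg : forall t, circ_fun (negC G) t = ~~ circ_fun G t.
  move=> t; rewrite /circ_fun /= eval_neg //.
  by case/andP: CC.1.
have pos0 : (0 < #|[pred t | ~~ circ_fun G t]|)%N by apply/card_gt0P; exists w0.
have h1 := key mpos CC ginv pos1.
have h0 : (2 ^ arity G <= #|[pred t | ~~ circ_fun G t]| * 2 ^ N)%N.
  have E : #|[pred t | ~~ circ_fun G t]| = #|[pred t | circ_fun (negC G) t]|.
    by apply: eq_card => t; rewrite !inE hneg.
  rewrite E; apply: (key mpos (negC_CC mpos CC)).
    by rewrite /csize /= size_neg.
  by rewrite -E.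
have hs : (#|[pred t | ~~ circ_fun G t]| + #|[pred t | circ_fun G t]| = 2 ^ arity G)%N.
  have := cardC [pred t | circ_fun G t]; rewrite card_tuple card_bool => <-.
  by rewrite addnC; congr (_ + _); apply: eq_card => t; rewrite !inE.
exact: bal_arith.
Qed.
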